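(* Let $V\in\mathcal C(S^1)$ be odd and let $f\ge0$ be a ($\mathcal C^1$) solution of (TP) with $D=0$ that is time-periodic, i.e. $f(T,\cdot)=f(0,\cdot)$ for some $T>0$ (and $f(t+T,\cdot)=f(t,\cdot)$). Then $f$ is a stationary solution.
   Context: $S^1=\mathbb R/\mathbb Z$; $(V*f)(\theta)=\int_{S^1}V(\theta-\psi)f(\psi)d\psi$. Equation (TP) with $D=0$: $\partial_tf=\partial_\theta((V*f)f)$. *)

(* Defs.v *)
From Stdlib Require Import Reals Lra ClassicalEpsilon.
Open Scope R_scope.

(* Functions on S^1 = R/Z are represented as 1-periodic functions R -> R. *)
Definition periodic1 (g : R -> R) : Prop := forall x, g (x + 1) = g x.

(* Integral over [0,1] (one period); equals the Riemann integral whenever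
   the integrand is Riemann integrable (which is the case for all integrands
   appearing below), and 0 otherwise. *)
Definition RInt01 (g : R -> R) : R :=
  match excluded_middle_informative
          (exists _ : Riemann_integrable g 0 1, True) with
  | left H => RiemannInt (proj1_sig (constructive_indefinite_description _ H))
  | right _ => 0
  end.

Definition conv (V g : R -> R) (theta : R) : R :=
  RInt01 (fun psi => V (theta - psi) * g psi).

Definition continuous2 (g : R -> R -> R) : Prop :=
  forall t x eps, 0 < eps -> exists delta, 0 < delta /\
    forall s y, Rabs (s - t) < delta -> Rabs (y - x) < delta ->
      Rabs (g s y - g t x) < eps.

Definition C1_with_partials (f ft fx : R -> R -> R) : Prop :=
  continuous2 f /\ continuous2 ft /\ continuous2 fx /\
  (forall t x, derivable_pt_lim (fun s => f s x) t (ft t x)) /\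
  (forall t x, derivable_pt_lim (fun y => f t y) x (fx t x)).

Definition solves_TP0 (V : R -> R) (f ft : R -> R -> R) : Prop :=
  forall t x,
    derivable_pt_lim (fun y => conv V (f t) y * f t y) x (ft t x).

(* Main.v *)
Require Import Defs.
From Stdlib Require Import Reals Lra Lia ZArith FunctionalExtensionality ClassicalEpsilon.
From Coquelicot Require Import Coquelicot.
Open Scope R_scope.

Lemma cont_eps (f : R -> R) x :
  (forall eps, 0 < eps -> exists d, 0 < d /\ forall z, Rabs (z - x) < d -> Rabs (f z - f x) < eps) ->
  continuous f x.
Proof.
  intros H. apply continuity_pt_filterlim.
  intros eps Heps. destruct (H eps Heps) as [d [Hd H2]].
  exists d; split; auto. intros z [_ Hz]. apply H2. exact Hz.
Qed.

Lemma eps_cont (f : R -> R) x : continuous f x ->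
  forall eps, 0 < eps -> exists d, 0 < d /\ forall z, Rabs (z - x) < d -> Rabs (f z - f x) < eps.
Proof.
  intros H. apply continuity_pt_filterlim in H.
  intros eps Heps. destruct (H eps Heps) as [d [Hd H2]].
  exists d; split; auto. intros z Hz. destruct (Req_dec x z) as [<-|Hne].
  rewrite Rminus_eq_0, Rabs_R0; auto.
  apply (H2 z). split; [split; [exact I| exact Hne]| exact Hz].
Qed.

Lemma c2_of_continuous2 g : continuous2 g -> forall s y, continuity_2d_pt g s y.
Proof.
  intros H s y eps. destruct (H s y eps (cond_pos eps)) as [d [Hd H2]].
  exists (mkposreal d Hd). intros u v Hu Hv. apply H2; auto.
Qed.

Lemma c2_cont_l g s y : continuity_2d_pt g s y -> continuous (fun z => g z y) s.
Proof.
  intros H. apply cont_eps. intros eps Heps. destruct (H (mkposreal eps Heps)) as [d H2].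
  exists d; split; [apply cond_pos|]. intros z Hz. apply H2; auto.
  replace (y - y) with 0 by ring. rewrite Rabs_R0. apply cond_pos.
Qed.

Lemma c2_cont_r g s y : continuity_2d_pt g s y -> continuous (fun z => g s z) y.
Proof.
  intros H. apply cont_eps. intros eps Heps. destruct (H (mkposreal eps Heps)) as [d H2].
  exists d; split; [apply cond_pos|]. intros z Hz. apply H2; auto.
  replace (s - s) with 0 by ring. rewrite Rabs_R0. apply cond_pos.
Qed.

Lemma c2_swap g s y : continuity_2d_pt g s y -> continuity_2d_pt (fun u v => g v u) y s.
Proof.
  intros H eps. destruct (H eps) as [d H2]. exists d. intros u v Hu Hv. apply H2; auto.
Qed.

Lemma c2_diff (V : R -> R) : (forall x, continuous V x) ->
  forall x y, continuity_2d_pt (fun u v => V (u - v)) x y.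
Proof.
  intros HV x y eps. destruct (eps_cont V (x - y) (HV _) eps (cond_pos eps)) as [d [Hd H2]].
  exists (mkposreal (d/2) ltac:(lra)). simpl. intros u v Hu Hv. apply H2.
  replace (u - v - (x - y)) with ((u - x) - (v - y)) by ring.
  eapply Rle_lt_trans; [apply Rabs_triang|]. rewrite Rabs_Ropp. lra.
Qed.

Lemma c2_1r (g : R -> R) : (forall x, continuous g x) ->
  forall x y, continuity_2d_pt (fun u v => g v) x y.
Proof.
  intros Hg x y eps. destruct (eps_cont g y (Hg _) eps (cond_pos eps)) as [d [Hd H2]].
  exists (mkposreal d Hd). simpl. intros u v Hu Hv. apply H2; auto.
Qed.

Lemma c2_1l (g : R -> R) : (forall x, continuous g x) ->
  forall x y, continuity_2d_pt (fun u v => g u) x y.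
Proof.
  intros Hg x y eps. destruct (eps_cont g x (Hg _) eps (cond_pos eps)) as [d [Hd H2]].
  exists (mkposreal d Hd). simpl. intros u v Hu Hv. apply H2; auto.
Qed.

Lemma PC1_le (h : R -> R -> R) a b : a <= b -> (forall p x, continuity_2d_pt h p x) ->
  forall p, continuous (fun p => RInt (h p) a b) p.
Proof.
  intros Hab Hh p. apply cont_eps. intros eps Heps.
  set (e := eps / (b - a + 1)).
  assert (He : 0 < e) by (unfold e; apply Rdiv_lt_0_compat; lra).
  destruct (uniform_continuity_2d_1d' h a b p (fun x _ => Hh p x) (mkposreal e He)) as [d Hd].
  exists d; split; [apply cond_pos|]. intros z Hz.
  assert (Ex : forall q, ex_RInt (h q) a b).
  { intros q. apply (ex_RInt_continuous (V:=R_CompleteNormedModule)). intros w _. apply c2_cont_r, Hh. }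
  assert (Heq : RInt (h z) a b - RInt (h p) a b = RInt (fun x => h z x - h p x) a b).
  { symmetry. apply (RInt_minus (V:=R_CompleteNormedModule)); auto. }
  rewrite Heq. eapply Rle_lt_trans.
  apply (abs_RInt_le_const _ a b e); auto.
  - apply (ex_RInt_minus (V:=R_CompleteNormedModule)); auto.
  - intros t Ht. left. apply (Hd t p t z); try lra.
    + split; apply Rlt_le; apply Rabs_lt_between'; rewrite Rminus_eq_0, Rabs_R0; apply cond_pos.
    + split; apply Rabs_le_between'; left; auto.
    + rewrite Rminus_eq_0, Rabs_R0; apply cond_pos.
  - unfold e. apply (Rmult_lt_reg_r (b - a + 1)); [lra|].
    simpl. replace ((b - a) * (eps / (b - a + 1)) * (b - a + 1)) with ((b-a)*eps) by (field; lra). rewrite Rmult_plus_distr_l. rewrite (Rmult_comm eps). lra.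
Qed.

Lemma PC1 (h : R -> R -> R) a b : (forall p x, continuity_2d_pt h p x) ->
  forall p, continuous (fun p => RInt (h p) a b) p.
Proof.
  intros Hh p. destruct (Rle_dec a b) as [Hab|Hab].
  - apply PC1_le; auto.
  - assert (H := PC1_le h b a ltac:(lra) Hh p).
    apply cont_eps. intros eps Heps. destruct (eps_cont _ _ H eps Heps) as [d [Hd H2]].
    exists d; split; auto. intros z Hz. specialize (H2 z Hz).
    assert (Ex : forall q, ex_RInt (h q) b a).
    { intros q. apply (ex_RInt_continuous (V:=R_CompleteNormedModule)). intros w _. apply c2_cont_r, Hh. }
    rewrite <- (opp_RInt_swap (h z)), <- (opp_RInt_swap (h p)) by auto. simpl.
    unfold opp; simpl.
    replace (- RInt (h z) b a - - RInt (h p) b a) with (- (RInt (h z) b a - RInt (h p) b a)) by ring.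
    rewrite Rabs_Ropp; auto.
Qed.

Lemma ex_RInt_cont (f : R -> R) a b : (forall x, continuous f x) -> ex_RInt f a b.
Proof. intros H. apply (ex_RInt_continuous (V:=R_CompleteNormedModule)). intros; apply H. Qed.

Lemma deriv0_const (F : R -> R) : (forall x, is_derive F x 0) -> forall a b, F b = F a.
Proof.
  intros H a b.
  assert (H1 : is_RInt (fun _ => 0) a b (minus (F b) (F a))).
  { apply (is_RInt_derive (V:=R_CompleteNormedModule) F (fun _ => 0)).
    - intros; apply H.
    - intros; apply continuous_const. }
  assert (H2 := is_RInt_const (V:=R_NormedModule) a b 0).
  apply (is_RInt_unique (V:=R_CompleteNormedModule)) in H1. apply (is_RInt_unique (V:=R_CompleteNormedModule)) in H2.
  rewrite H1 in H2. unfold minus, plus, opp in H2. simpl in H2.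
  unfold scal in H2; simpl in H2. unfold mult in H2; simpl in H2. lra.
Qed.

Lemma is_derive_RInt_up (G : R -> R) a : (forall x, continuous G x) ->
  forall s, is_derive (fun s => RInt G a s) s (G s).
Proof.
  intros HG s. apply (is_derive_RInt (V:=R_NormedModule) G (RInt G a) a s).
  - apply filter_forall. intros b. apply (RInt_correct (V:=R_CompleteNormedModule)).
    apply ex_RInt_cont; auto.
  - apply HG.
Qed.

Lemma fubini (g : R -> R -> R) : (forall x y, continuity_2d_pt g x y) ->
  RInt (fun x => RInt (fun y => g x y) 0 1) 0 1 = RInt (fun y => RInt (fun x => g x y) 0 1) 0 1.
Proof.
  intros Hg.
  set (G := fun x => RInt (fun y => g x y) 0 1).
  assert (HG : forall x, continuous G x) by (intros; apply PC1; auto).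
  assert (Hgx : forall y x, continuous (fun x => g x y) x) by (intros; apply c2_cont_l, Hg).
  assert (Hgy : forall x y, continuous (fun y => g x y) y) by (intros; apply c2_cont_r, Hg).
  set (F := fun s => RInt G 0 s - RInt (fun y => RInt (fun x => g x y) 0 s) 0 1).
  assert (HF : forall s, is_derive F s 0).
  { intros s. replace 0 with (G s - G s) by ring. apply (is_derive_minus (K:=R_AbsRing) (V:=R_NormedModule)).
    - apply is_derive_RInt_up; auto.
    - unfold G.
      assert (Hd : forall u v, Derive (fun z => RInt (fun x => g x v) 0 z) u = g u v).
      { intros u v. refine (Derive_RInt (fun x => g x v) 0 u _ _); [|apply Hgx].
        apply filter_forall. intros; apply ex_RInt_cont; auto. }
      replace (RInt (fun y => g s y) 0 1) with (RInt (fun t => Derive (fun z => RInt (fun x => g x t) 0 z) s) 0 1).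
      2: { apply RInt_ext. intros; rewrite Hd; auto. }
      apply (is_derive_RInt_param (fun z t => RInt (fun x => g x t) 0 z)).
      + apply filter_forall. intros x0 t _. eexists. apply is_derive_RInt_up; auto.
      + intros t _. apply continuity_2d_pt_ext with (f := g).
        * intros; rewrite Hd; auto.
        * apply Hg.
      + apply filter_forall. intros y. apply ex_RInt_cont. intros p.
        apply (PC1 (fun p x => g x p)). intros; apply c2_swap, Hg. }
  assert (E := deriv0_const F HF 0 1). unfold F in E.
  rewrite !RInt_point in E.
  rewrite (RInt_ext (fun y => RInt (fun x => g x y) 0 0) (fun _ => 0)) in E.
  2: { intros; apply (RInt_point (V:=R_CompleteNormedModule)). }
  rewrite RInt_const in E. unfold G in E. unfold zero, scal in E; simpl in E. unfold mult in E; simpl in E.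
  unfold G. lra.
Qed.

Lemma per_nat (g : R -> R) : periodic1 g -> forall n x, g (x + INR n) = g x.
Proof.
  intros Hg n. induction n as [|n IH]; intros x.
  - simpl. rewrite Rplus_0_r; auto.
  - rewrite S_INR. replace (x + (INR n + 1)) with ((x + INR n) + 1) by ring.
    rewrite Hg; auto.
Qed.

Lemma per_Z (g : R -> R) : periodic1 g -> forall k x, g (x + IZR k) = g x.
Proof.
  intros Hg k x. destruct (Z_le_gt_dec 0 k) as [Hk|Hk].
  - rewrite <- (Z2Nat.id k Hk). rewrite <- INR_IZR_INZ. apply per_nat; auto.
  - assert (Hk' : (0 <= - k)%Z) by lia.
    replace k with (- (Z.of_nat (Z.to_nat (- k))))%Z by (rewrite Z2Nat.id; lia).
    rewrite opp_IZR, <- INR_IZR_INZ.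
    rewrite <- (per_nat g Hg (Z.to_nat (-k)) (x + - INR (Z.to_nat (- k)))).
    f_equal. ring.
Qed.

Lemma per_reduce (g : R -> R) : periodic1 g -> forall x, exists y, 0 <= y <= 1 /\ g x = g y.
Proof.
  intros Hg x. destruct (archimed x) as [H1 H2].
  exists (x + IZR (1 - up x)). split.
  - rewrite minus_IZR. lra.
  - rewrite per_Z; auto.
Qed.

Lemma deriv_shift (F F' : R -> R) y x : (forall z, is_derive F z (F' z)) ->
  is_derive (fun z => F (z - y)) x (F' (x - y)).
Proof.
  intros HF.
  assert (H := is_derive_comp (K:=R_AbsRing) (V:=R_NormedModule) F (fun z => z - y) x (F' (x - y)) 1 (HF _)).
  assert (H1 : is_derive (fun z : R => z - y) x 1).
  { apply is_derive_Reals. replace 1 with (1 - 0) by ring.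
    apply derivable_pt_lim_minus; [apply derivable_pt_lim_id|apply derivable_pt_lim_const]. }
  specialize (H H1). unfold scal in H; simpl in H; unfold mult in H; simpl in H.
  rewrite Rmult_1_l in H. exact H.
Qed.

Lemma deriv_refl (F F' : R -> R) y x : (forall z, is_derive F z (F' z)) ->
  is_derive (fun z => F (x - z)) y (- F' (x - y)).
Proof.
  intros HF.
  assert (H := is_derive_comp (K:=R_AbsRing) (V:=R_NormedModule) F (fun z => x - z) y (F' (x - y)) (-1) (HF _)).
  assert (H1 : is_derive (fun z : R => x - z) y (-1)).
  { apply is_derive_Reals. replace (-1) with (0 - 1) by ring.
    apply derivable_pt_lim_minus; [apply derivable_pt_lim_const|apply derivable_pt_lim_id]. }
  specialize (H H1). unfold scal in H; simpl in H; unfold mult in H; simpl in H.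
  replace (- F' (x - y)) with (-1 * F' (x - y)) by ring. exact H.
Qed.

Definition Wf (V : R -> R) (x : R) := RInt V 0 x.

Section WProps.
Variable V : R -> R.
Hypothesis hVc : forall x, continuous V x.
Hypothesis hVp : periodic1 V.
Hypothesis hVodd : forall x, V (- x) = - V x.

Lemma W_der : forall x, is_derive (Wf V) x (V x).
Proof. intros x. apply is_derive_RInt_up; auto. Qed.

Lemma W_cont : forall x, continuous (Wf V) x.
Proof. intros x. apply (ex_derive_continuous (K:=R_AbsRing) (V:=R_NormedModule) (Wf V) x). eexists; apply W_der. Qed.

Lemma W_even : forall x, Wf V (- x) = Wf V x.
Proof.
  set (h := fun x => Wf V (0 - x) - Wf V x).
  assert (Hh : forall x, is_derive h x 0).
  { intros x. assert (Hd : is_derive h x (- V (0 - x) - V x)).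
    { apply (is_derive_minus (K:=R_AbsRing) (V:=R_NormedModule)).
      - apply (deriv_refl (Wf V) V x 0 W_der).
      - apply W_der. }
    replace (- V (0 - x) - V x) with 0 in Hd; auto.
    replace (0 - x) with (- x) by ring. rewrite hVodd. ring. }
  intros x. assert (E := deriv0_const h Hh 0 x). unfold h in E.
  replace (0 - x) with (- x) in E by ring. replace (0 - 0) with 0 in E by ring. lra.
Qed.

Lemma W0 : Wf V 0 = 0.
Proof. unfold Wf. apply (RInt_point (V:=R_CompleteNormedModule)). Qed.

Lemma W_per : periodic1 (Wf V).
Proof.
  set (h := fun x => Wf V (x - -1) - Wf V x).
  assert (Hh : forall x, is_derive h x 0).
  { intros x. assert (Hd : is_derive h x (V (x - -1) - V x)).
    { apply (is_derive_minus (K:=R_AbsRing) (V:=R_NormedModule)).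
      - apply (deriv_shift (Wf V) V (-1) x W_der).
      - apply W_der. }
    replace (V (x - -1) - V x) with 0 in Hd; auto.
    replace (x - -1) with (x + 1) by ring. rewrite hVp. ring. }
  assert (E1 := deriv0_const h Hh 0 (-1)). unfold h in E1.
  replace (-1 - -1) with 0 in E1 by ring. replace (0 - -1) with 1 in E1 by ring.
  rewrite W0 in E1. assert (E2 := W_even 1). 
  intros x. assert (E := deriv0_const h Hh 0 x). unfold h in E.
  replace (x - -1) with (x + 1) in E by ring. replace (0 - -1) with 1 in E by ring.
  rewrite W0 in E. replace (- (1)) with (-1) in E2 by ring. lra.
Qed.

Lemma W_bound : exists M, forall z, Rabs (Wf V z) <= M.
Proof.
  destruct (continuity_ab_maj (fun z => Rabs (Wf V z)) 0 1 ltac:(lra)) as [m [Hm _]].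
  - intros c _. apply continuity_pt_filterlim.
    apply (continuous_comp (Wf V) Rabs). apply W_cont. apply continuous_Rabs.
  - exists (Rabs (Wf V m)). intros z. destruct (per_reduce (Wf V) W_per z) as [y [Hy ->]].
    apply Hm; auto.
Qed.
End WProps.

Definition KI (K : R -> R) (g : R -> R -> R) (s x : R) := RInt (fun y => K (x - y) * g s y) 0 1.

Lemma c2_Kg (K : R -> R) (g : R -> R -> R) s : (forall x, continuous K x) ->
  (forall s y, continuity_2d_pt g s y) ->
  forall x y, continuity_2d_pt (fun p y => K (p - y) * g s y) x y.
Proof.
  intros HK Hg x y. apply continuity_2d_pt_mult.
  - apply c2_diff; auto.
  - apply (c2_1r (g s)). intros; apply c2_cont_r, Hg.
Qed.

Lemma KI_cont K g s : (forall x, continuous K x) -> (forall s y, continuity_2d_pt g s y) ->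
  forall x, continuous (KI K g s) x.
Proof.
  intros HK Hg x. unfold KI.
  apply (PC1 (fun p y => K (p - y) * g s y)). apply c2_Kg; auto.
Qed.

Lemma KI_ex K g s x : (forall x, continuous K x) -> (forall s y, continuity_2d_pt g s y) ->
  ex_RInt (fun y => K (x - y) * g s y) 0 1.
Proof.
  intros HK Hg. apply ex_RInt_cont. intros y.
  apply (c2_cont_r (fun p y => K (p - y) * g s y)). apply c2_Kg; auto.
Qed.

Lemma KI_dx K K' g s x : (forall x, continuous K' x) -> (forall z, is_derive K z (K' z)) ->
  (forall s y, continuity_2d_pt g s y) ->
  is_derive (KI K g s) x (KI K' g s x).
Proof.
  intros HK' HK Hg.
  assert (HKc : forall x, continuous K x).
  { intros z. apply (ex_derive_continuous (K:=R_AbsRing) (V:=R_NormedModule) K z). eexists; apply HK. }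
  assert (Hd : forall z y, is_derive (fun z => K (z - y) * g s y) z (K' (z - y) * g s y)).
  { intros z y. apply is_derive_Reals. apply derivable_pt_lim_scal_right.
    apply is_derive_Reals. apply deriv_shift; auto. }
  unfold KI at 2. rewrite (RInt_ext _ (fun y => Derive (fun z => K (z - y) * g s y) x)).
  2:{ intros y _. symmetry. apply is_derive_unique, Hd. }
  apply (is_derive_RInt_param (fun z y => K (z - y) * g s y)).
  - apply filter_forall. intros z y _. eexists; apply Hd.
  - intros y _. apply continuity_2d_pt_ext with (f := fun u v => K' (u - v) * g s v).
    + intros; symmetry; apply is_derive_unique, Hd.
    + apply c2_Kg; auto.
  - apply filter_forall. intros z. apply KI_ex; auto.
Qed.

Lemma cont_refl (K : R -> R) x : (forall x, continuous K x) -> forall y, continuous (fun y => K (x - y)) y.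
Proof.
  intros HK y. apply cont_eps. intros eps Heps.
  destruct (eps_cont K (x - y) (HK _) eps Heps) as [d [Hd H]]. exists d; split; auto.
  intros z Hz. apply H. replace (x - z - (x - y)) with (- (z - y)) by ring. rewrite Rabs_Ropp; auto.
Qed.

Lemma KI_dt K g gs x s : (forall x, continuous K x) ->
  (forall s y, continuity_2d_pt g s y) -> (forall s y, continuity_2d_pt gs s y) ->
  (forall s y, is_derive (fun s => g s y) s (gs s y)) ->
  is_derive (fun s => KI K g s x) s (KI K gs s x).
Proof.
  intros HK Hg Hgs Hd0.
  assert (Hd : forall z y, is_derive (fun z => K (x - y) * g z y) z (K (x - y) * gs z y)).
  { intros z y. apply is_derive_Reals. apply derivable_pt_lim_scal.
    apply is_derive_Reals. apply Hd0. }
  unfold KI at 2. rewrite (RInt_ext _ (fun y => Derive (fun z => K (x - y) * g z y) s)).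
  2:{ intros y _. symmetry. apply is_derive_unique, Hd. }
  apply (is_derive_RInt_param (fun z y => K (x - y) * g z y)).
  - apply filter_forall. intros z y _. eexists; apply Hd.
  - intros y _. apply continuity_2d_pt_ext with (f := fun u v => K (x - v) * gs u v).
    + intros; symmetry; apply is_derive_unique, Hd.
    + apply continuity_2d_pt_mult; auto.
      apply (c2_1r (fun v => K (x - v))). apply cont_refl; auto.
  - apply filter_forall. intros z. apply ex_RInt_cont. intros y.
    apply (continuous_mult (K:=R_AbsRing)). apply cont_refl; auto.
    apply c2_cont_r; auto.
Qed.

Lemma KI_c2 K g M : (forall x, continuous K x) -> (forall z, Rabs (K z) <= M) ->
  (forall s y, continuity_2d_pt g s y) -> forall s x, continuity_2d_pt (KI K g) s x.
Proof.
  intros HK HM Hg s x eps.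
  assert (HM0 : 0 <= M) by (eapply Rle_trans; [apply Rabs_pos| apply (HM 0)]).
  destruct (eps_cont _ _ (KI_cont K g s HK Hg x) (eps/2) ltac:(destruct eps; simpl; lra)) as [d1 [Hd1 H1]].
  set (eta := eps / (2 * (M + 1))).
  assert (Heta : 0 < eta) by (unfold eta; destruct eps; simpl; apply Rdiv_lt_0_compat; lra).
  destruct (uniform_continuity_2d_1d' g 0 1 s (fun x _ => Hg s x) (mkposreal eta Heta)) as [d2 Hd2].
  assert (Hd : 0 < Rmin d1 d2) by (apply Rmin_pos; [lra| apply cond_pos]).
  exists (mkposreal _ Hd). simpl. intros u v Hu Hv.
  assert (Hv1 : Rabs (v - x) < d1) by (eapply Rlt_le_trans; [apply Hv| apply Rmin_l]).
  assert (Hu2 : Rabs (u - s) < d2) by (eapply Rlt_le_trans; [apply Hu| apply Rmin_r]).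
  specialize (H1 v Hv1).
  assert (H2 : Rabs (KI K g u v - KI K g s v) <= eps / 2).
  { unfold KI. rewrite <- (RInt_minus (V:=R_CompleteNormedModule)) by (apply KI_ex; auto).
    apply Rle_trans with ((1 - 0) * (M * eta)).
    2:{ unfold eta. destruct eps as [e He]; simpl.
        apply Rle_trans with (M * (e / (2 * M + 2)) + (e / (2 * M + 2))).
        - replace (2 * (M + 1)) with (2 * M + 2) by ring.
          assert (0 < e / (2 * M + 2)) by (apply Rdiv_lt_0_compat; lra). lra.
        - right. field. lra. }
    apply abs_RInt_le_const; [lra| |].
    - apply (ex_RInt_minus (V:=R_CompleteNormedModule)); apply KI_ex; auto.
    - intros t Ht. unfold minus, plus, opp; simpl.
      replace (K (v - t) * g u t + - (K (v - t) * g s t)) with (K (v - t) * (g u t - g s t)) by ring.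
      rewrite Rabs_mult. apply Rmult_le_compat; try apply Rabs_pos; auto.
      left. apply (Hd2 t s t u); try lra.
      + split; apply Rlt_le; apply Rabs_lt_between'; rewrite Rminus_eq_0, Rabs_R0; apply cond_pos.
      + split; apply Rabs_le_between'; left; auto.
      + rewrite Rminus_eq_0, Rabs_R0; apply cond_pos. }
  replace (KI K g u v - KI K g s x) with ((KI K g u v - KI K g s v) + (KI K g s v - KI K g s x)) by ring.
  eapply Rle_lt_trans; [apply Rabs_triang|]. destruct eps; simpl in *. lra.
Qed.

Lemma int0 (h : R -> R) : (forall x, continuous h x) -> (forall x, 0 <= x <= 1 -> 0 <= h x) ->
  RInt h 0 1 = 0 -> forall x, 0 <= x <= 1 -> h x = 0.
Proof.
  intros Hc Hp Hi x0 Hx0. destruct (Rle_lt_or_eq_dec 0 (h x0) (Hp x0 Hx0)) as [Hlt|]; auto.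
  exfalso.
  destruct (eps_cont h x0 (Hc x0) (h x0 / 2) ltac:(lra)) as [d [Hd H]].
  set (a := Rmax 0 (x0 - d/2)). set (b := Rmin 1 (x0 + d/2)).
  assert (Ha : 0 <= a /\ x0 - d/2 <= a /\ a <= x0 /\ (a = 0 \/ a = x0 - d/2)).
  { unfold a, Rmax; destruct Rle_dec; lra. }
  assert (Hb : b <= 1 /\ b <= x0 + d/2 /\ x0 <= b /\ (b = 1 \/ b = x0 + d/2)).
  { unfold b, Rmin; destruct Rle_dec; lra. }
  assert (Hab : a < b).
  { destruct Ha as [? [? [? [Ha|Ha]]]]; destruct Hb as [? [? [? [Hb|Hb]]]]; lra. }
  assert (Ex : forall u v, ex_RInt h u v) by (intros; apply ex_RInt_cont; auto).
  assert (I1 : 0 <= RInt h 0 a) by (apply RInt_ge_0; auto; try lra; intros; apply Hp; lra).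
  assert (I3 : 0 <= RInt h b 1) by (apply RInt_ge_0; auto; try lra; intros; apply Hp; lra).
  assert (I2 : 0 < RInt h a b).
  { apply RInt_gt_0; auto. intros y Hy.
    assert (Hy' : Rabs (y - x0) < d) by (apply Rabs_def1; lra).
    specialize (H y Hy'). apply Rabs_def2 in H. lra. }
  assert (C1 := RInt_Chasles (V:=R_CompleteNormedModule) h 0 a 1 (Ex _ _) (Ex _ _)).
  assert (C2 := RInt_Chasles (V:=R_CompleteNormedModule) h a b 1 (Ex _ _) (Ex _ _)).
  simpl in C1, C2. unfold plus in C1, C2; simpl in C1, C2. lra.
Qed.

Lemma cont_plus (f g : R -> R) x : continuous f x -> continuous g x -> continuous (fun y => f y + g y) x.
Proof. intros; apply (continuous_plus (V:=R_NormedModule)); auto. Qed.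
Lemma cont_mult (f g : R -> R) x : continuous f x -> continuous g x -> continuous (fun y => f y * g y) x.
Proof. intros; apply (continuous_mult (K:=R_AbsRing)); auto. Qed.
Lemma der_mult (f g : R -> R) x df dg : is_derive f x df -> is_derive g x dg ->
  is_derive (fun y => f y * g y) x (df * g x + f x * dg).
Proof. intros H1 H2. apply is_derive_Reals. apply derivable_pt_lim_mult; apply is_derive_Reals; auto. Qed.

Lemma KI_per K g s : periodic1 K -> periodic1 (KI K g s).
Proof.
  intros HK x. unfold KI. apply RInt_ext. intros y _.
  replace (x + 1 - y) with ((x - y) + 1) by ring. rewrite HK. auto.
Qed.

Lemma RInt_plusR (f g : R -> R) a b : ex_RInt f a b -> ex_RInt g a b ->
  RInt (fun x => f x + g x) a b = RInt f a b + RInt g a b.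
Proof. intros; apply (RInt_plus (V:=R_CompleteNormedModule)); auto. Qed.
Lemma RInt_scalR (f : R -> R) a b l : ex_RInt f a b ->
  RInt (fun x => l * f x) a b = l * RInt f a b.
Proof. intros; apply (RInt_scal (V:=R_CompleteNormedModule)); auto. Qed.
Lemma RInt_oppR (f : R -> R) a b : ex_RInt f a b ->
  RInt (fun x => - f x) a b = - RInt f a b.
Proof. intros; apply (RInt_opp (V:=R_CompleteNormedModule)); auto. Qed.

Lemma by_parts (P dP : R -> R) : (forall x, is_derive P x (dP x)) -> (forall x, continuous dP x) ->
  RInt dP 0 1 = P 1 - P 0.
Proof.
  intros H1 H2. apply (is_RInt_unique (V:=R_CompleteNormedModule)).
  apply (is_RInt_derive (V:=R_CompleteNormedModule)); intros; auto.
Qed.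

Section Main.
Variables (V : R -> R) (f ft : R -> R -> R).
Hypothesis hVc : forall x, continuous V x.
Hypothesis hVp : periodic1 V.
Hypothesis hVodd : forall x, V (- x) = - V x.
Hypothesis hfp : forall t, periodic1 (f t).
Hypothesis hf : forall s y, continuity_2d_pt f s y.
Hypothesis hft : forall s y, continuity_2d_pt ft s y.
Hypothesis hdt : forall s y, is_derive (fun s => f s y) s (ft s y).
Hypothesis hsol : forall t x, is_derive (fun y => KI V f t y * f t y) x (ft t x).

Definition uf t x := KI V f t x * f t x.

Let W := Wf V.
Let Wc := W_cont V hVc.
Let Wd := W_der V hVc.

Lemma fcx t x : continuous (f t) x.
Proof. apply (c2_cont_r f); auto. Qed.
Lemma ftcx t x : continuous (ft t) x.
Proof. apply (c2_cont_r ft); auto. Qed.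
Lemma ccx t x : continuous (KI V f t) x.
Proof. apply KI_cont; auto. Qed.
Lemma Acx t x : continuous (KI W f t) x.
Proof. apply KI_cont; auto. Qed.
Lemma ucx t x : continuous (uf t) x.
Proof. apply cont_mult; [apply ccx| apply fcx]. Qed.
Lemma u_per t : periodic1 (uf t).
Proof. intros x. unfold uf. rewrite KI_per, hfp; auto. Qed.

Lemma claim1 t : RInt (fun x => ft t x * KI W f t x) 0 1 = - RInt (fun x => uf t x * KI V f t x) 0 1.
Proof.
  assert (H : RInt (fun x => ft t x * KI W f t x + uf t x * KI V f t x) 0 1 =
              uf t 1 * KI W f t 1 - uf t 0 * KI W f t 0).
  { apply (by_parts (fun x => uf t x * KI W f t x)).
    - intros x. apply der_mult. apply hsol. apply KI_dx; auto.
    - intros x. apply cont_plus; apply cont_mult; auto using ftcx, Acx, ucx, ccx. }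
  rewrite RInt_plusR in H.
  - enough (uf t 1 * KI W f t 1 - uf t 0 * KI W f t 0 = 0) by lra.
    replace 1 with (0 + 1) by ring. rewrite u_per, KI_per. ring. apply W_per; auto.
  - apply ex_RInt_cont. intros; apply cont_mult; [apply ftcx|apply Acx].
  - apply ex_RInt_cont. intros; apply cont_mult; [apply ucx|apply ccx].
Qed.

Lemma B_eq t x : KI W ft t x = RInt (fun y => V (x - y) * uf t y) 0 1.
Proof.
  assert (Hc1 : forall y, continuous (fun y => V (x - y) * uf t y) y).
  { intros; apply cont_mult; [apply cont_refl; auto| apply ucx]. }
  assert (Hc2 : forall y, continuous (fun y => W (x - y) * ft t y) y).
  { intros; apply cont_mult; [apply cont_refl; auto| apply ftcx]. }
  assert (H : RInt (fun y => - V (x - y) * uf t y + W (x - y) * ft t y) 0 1 =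
              W (x - 1) * uf t 1 - W (x - 0) * uf t 0).
  { apply (by_parts (fun y => W (x - y) * uf t y)).
    - intros y. apply (der_mult (fun y => W (x - y)) (uf t) y (- V (x - y)) (ft t y)).
      apply (deriv_refl W V y x Wd). apply (hsol t y).
    - intros y. apply cont_plus. 2: apply Hc2.
      apply cont_mult; [|apply ucx]. apply cont_eps. intros eps Heps.
      destruct (eps_cont _ _ (cont_refl V x hVc y) eps Heps) as [d [Hd Hd2]].
      exists d; split; auto. intros z Hz. specialize (Hd2 z Hz).
      replace (- V (x - z) - - V (x - y)) with (- (V (x - z) - V (x - y))) by ring.
      rewrite Rabs_Ropp; auto. }
  rewrite RInt_plusR in H.
  - rewrite (RInt_ext (fun y => - V (x - y) * uf t y) (fun y => - (V (x - y) * uf t y))) in H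
      by (intros; simpl; ring).
    rewrite RInt_oppR in H by (apply ex_RInt_cont; auto).
    assert (U1 : uf t 1 = uf t 0) by (replace 1 with (0 + 1) by ring; apply u_per).
    rewrite U1 in H.
    assert (HW := W_per V hVc hVp hVodd (x - 1)). replace (x - 1 + 1) with x in HW by ring.
    fold W in HW. replace (x - 0) with x in H by ring. rewrite HW in H.
    unfold KI. lra.
  - apply ex_RInt_cont. intros y. apply cont_mult; [|apply ucx]. apply cont_eps. intros eps Heps.
      destruct (eps_cont _ _ (cont_refl V x hVc y) eps Heps) as [d [Hd Hd2]].
      exists d; split; auto. intros z Hz. specialize (Hd2 z Hz).
      replace (- V (x - z) - - V (x - y)) with (- (V (x - z) - V (x - y))) by ring.
      rewrite Rabs_Ropp; auto.
  - apply ex_RInt_cont; auto.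
Qed.

Lemma claim2 t : RInt (fun x => f t x * KI W ft t x) 0 1 = - RInt (fun x => uf t x * KI V f t x) 0 1.
Proof.
  rewrite (RInt_ext (fun x => f t x * KI W ft t x) (fun x => RInt (fun y => f t x * (V (x - y) * uf t y)) 0 1)).
  2:{ intros x _. simpl. rewrite B_eq. rewrite RInt_scalR; auto.
      apply ex_RInt_cont. intros; apply cont_mult; [apply cont_refl; auto| apply ucx]. }
  rewrite (fubini (fun x y => f t x * (V (x - y) * uf t y))).
  2:{ intros x y. apply continuity_2d_pt_mult. apply (c2_1l (f t)); intros; apply fcx.
      apply continuity_2d_pt_mult. apply c2_diff; auto. apply (c2_1r (uf t)); intros; apply ucx. }
  rewrite <- RInt_oppR.
  2:{ apply ex_RInt_cont. intros; apply cont_mult; [apply ucx|apply ccx]. }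
  apply RInt_ext. intros y _.
  rewrite (RInt_ext (fun x => f t x * (V (x - y) * uf t y)) (fun x => (- uf t y) * (V (y - x) * f t x))).
  2:{ intros x _. simpl. replace (y - x) with (- (x - y)) by ring. rewrite hVodd. ring. }
  rewrite RInt_scalR. unfold KI. symmetry. apply Ropp_mult_distr_l.
  apply KI_ex; auto.
Qed.

Definition En t := RInt (fun x => f t x * KI W f t x) 0 1.

Lemma En_der t : is_derive En t (-2 * RInt (fun x => uf t x * KI V f t x) 0 1).
Proof.
  destruct (W_bound V hVc hVp hVodd) as [M HM].
  assert (Hd : forall z y, is_derive (fun z => f z y * KI W f z y) z (ft z y * KI W f z y + f z y * KI W ft z y)).
  { intros z y. apply (der_mult (fun z => f z y) (fun z => KI W f z y) z (ft z y) (KI W ft z y)).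
    apply hdt. apply KI_dt; auto. }
  replace (-2 * RInt (fun x => uf t x * KI V f t x) 0 1) with
    (RInt (fun x => ft t x * KI W f t x + f t x * KI W ft t x) 0 1).
  2:{ rewrite RInt_plusR. rewrite claim1, claim2. lra.
      apply ex_RInt_cont. intros; apply cont_mult; [apply ftcx|apply Acx].
      apply ex_RInt_cont. intros; apply cont_mult; [apply fcx|apply KI_cont; auto]. }
  unfold En. rewrite (RInt_ext (fun x => ft t x * KI W f t x + f t x * KI W ft t x)
     (fun x => Derive (fun z => f z x * KI W f z x) t)).
  2:{ intros y _. symmetry. apply is_derive_unique, Hd. }
  apply (is_derive_RInt_param (fun z x => f z x * KI W f z x)).
  - apply filter_forall. intros z y _. eexists; apply Hd.
  - intros y _. apply continuity_2d_pt_ext with (f := fun u v => ft u v * KI W f u v + f u v * KI W ft u v).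
    + intros; symmetry; apply is_derive_unique, Hd.
    + apply continuity_2d_pt_plus; apply continuity_2d_pt_mult; auto; eapply KI_c2; eauto.
  - apply filter_forall. intros z. apply ex_RInt_cont. intros; apply cont_mult; [apply fcx|apply Acx].
Qed.

Lemma uc_nonneg (hpos : forall t x, 0 <= f t x) t : 0 <= RInt (fun x => uf t x * KI V f t x) 0 1.
Proof.
  apply RInt_ge_0; [lra| |].
  - apply ex_RInt_cont. intros; apply cont_mult; [apply ucx|apply ccx].
  - intros x _. unfold uf. specialize (hpos t x).
    replace (KI V f t x * f t x * KI V f t x) with (f t x * (KI V f t x * KI V f t x)) by ring.
    apply Rmult_le_pos; auto. apply Rle_0_sqr.
Qed.

Variable T : R.
Hypothesis hpos : forall t x, 0 <= f t x.
Hypothesis hT : 0 < T.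
Hypothesis hper : forall t x, f (t + T) x = f t x.

Lemma En_per t : En (t + T) = En t.
Proof.
  assert (E : f (t + T) = f t) by (apply functional_extensionality; intros; apply hper).
  unfold En, KI. rewrite E. reflexivity.
Qed.

Lemma En_mono a b : a <= b -> En b <= En a.
Proof.
  intros Hab.
  destruct (MVT_gen En a b (fun t => -2 * RInt (fun x => uf t x * KI V f t x) 0 1)) as [c0 [_ Hc]].
  - intros; apply En_der.
  - intros x _. apply continuity_pt_filterlim.
    apply (ex_derive_continuous (K:=R_AbsRing) (V:=R_NormedModule) En x). eexists; apply En_der.
  - assert (H := uc_nonneg hpos c0). nra.
Qed.

Lemma uc_zero t : RInt (fun x => uf t x * KI V f t x) 0 1 = 0.
Proof.
  assert (Hloc : is_derive En t 0).
  { apply (is_derive_ext_loc (fun _ => En t)).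
    - exists (mkposreal T hT). intros y Hy.
      assert (Hy' : Rabs (y - t) < T) by exact Hy.
      apply Rabs_lt_between' in Hy'.
      destruct (Rle_dec y t).
      + assert (E1 := En_per (t - T)). replace (t - T + T) with t in E1 by ring.
        assert (M1 := En_mono (t - T) y ltac:(lra)). assert (M2 := En_mono y t ltac:(lra)). lra.
      + assert (E1 := En_per t).
        assert (M1 := En_mono t y ltac:(lra)). assert (M2 := En_mono y (t + T) ltac:(lra)). lra.
    - apply (is_derive_const (K:=R_AbsRing) (V:=R_NormedModule)). }
  apply is_derive_unique in Hloc. rewrite (is_derive_unique _ _ _ (En_der t)) in Hloc. lra.
Qed.

Lemma u_zero t x : uf t x = 0.
Proof.
  destruct (per_reduce (uf t) (u_per t) x) as [y [Hy ->]].
  assert (H := int0 (fun x => uf t x * KI V f t x)).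
  assert (H0 : uf t y * KI V f t y = 0).
  { apply H; auto.
    - intros; apply cont_mult; [apply ucx|apply ccx].
    - intros z _. unfold uf. replace (KI V f t z * f t z * KI V f t z) with (f t z * (KI V f t z * KI V f t z)) by ring.
      apply Rmult_le_pos; auto. apply Rle_0_sqr.
    - apply uc_zero. }
  unfold uf in *. assert (Hp := hpos t y).
  assert (H2 : (KI V f t y * f t y) * (KI V f t y * f t y) = 0).
  { replace ((KI V f t y * f t y) * (KI V f t y * f t y)) with (f t y * (KI V f t y * f t y * KI V f t y)) by ring.
    rewrite H0. ring. }
  apply Rmult_integral in H2. destruct H2; auto.
Qed.

Lemma ft_zero t x : ft t x = 0.
Proof.
  assert (H := hsol t x).
  apply (is_derive_ext (fun y => KI V f t y * f t y) (fun _ => 0)) in H.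
  2:{ intros y. apply (u_zero t y). }
  apply is_derive_unique in H. rewrite Derive_const in H. auto.
Qed.

Lemma f_const t x : f t x = f 0 x.
Proof.
  apply (deriv0_const (fun s => f s x)). intros s. rewrite <- (ft_zero s x). apply hdt.
Qed.
End Main.

Lemma RInt01_eq g : ex_RInt g 0 1 -> RInt01 g = RInt g 0 1.
Proof.
  intros H. unfold RInt01. destruct excluded_middle_informative as [e|n].
  - symmetry. apply RInt_Reals.
  - exfalso. apply n. exists (ex_RInt_Reals_0 _ _ _ H). exact I.
Qed.

Theorem mainTheorem16
  (V : R -> R) (f ft fx : R -> R -> R) (T : R)
  (hVc : continuity V) (hVp : periodic1 V) (hVodd : forall x, V (- x) = - V x)
  (hfp : forall t, periodic1 (f t))
  (hf1 : C1_with_partials f ft fx)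
  (hsol : solves_TP0 V f ft)
  (hpos : forall t x, 0 <= f t x)
  (hT : 0 < T) (hper : forall t x, f (t + T) x = f t x) :
  forall t x, f t x = f 0 x.
Proof.
  destruct hf1 as [Hf [Hft [_ [Hdt _]]]].
  assert (hVc' : forall x, continuous V x) by (intros; apply continuity_pt_filterlim, hVc).
  assert (hf : forall s y, continuity_2d_pt f s y) by (apply c2_of_continuous2; auto).
  assert (hft : forall s y, continuity_2d_pt ft s y) by (apply c2_of_continuous2; auto).
  assert (hdt : forall s y, is_derive (fun s => f s y) s (ft s y)) by (intros; apply is_derive_Reals, Hdt).
  assert (hsol' : forall t x, is_derive (fun y => KI V f t y * f t y) x (ft t x)).
  { intros t x. apply (is_derive_ext (fun y => conv V (f t) y * f t y)).
    - intros y. unfold conv, KI. rewrite RInt01_eq; auto. apply KI_ex; auto.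
    - apply is_derive_Reals, hsol. }
  intros t x. exact (f_const V f ft hVc' hVp hVodd hfp hf hft hdt hsol' T hpos hT hper t x).
Qed.
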